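(* If $L\in\mathrm{Gr}(V,m)$ and $L\cap\operatorname{int}(K)\neq\emptyset$, then $$\sigma(L)=\min_{v\in K,\ |||v|||=1}\ \max_{x\in L,\ \|x\|=1}\lambda_v(x)=\min_{v\in K,\ y\in L^\perp,\ u\in K^*,\ |||v|||=1,\ \langle u,v\rangle=1}\|u-y\|^*.$$
   Context: $V$ is a finite-dimensional real vector space with inner product $\langle\cdot,\cdot\rangle$; $K\subseteq V$ a regular closed convex cone (closed, convex, pointed, nonempty interior) with dual cone $K^*:=\{u:\langle u,x\rangle\ge0\ \forall x\in K\}$; $L^\perp$ the orthogonal complement; $\mathrm{Gr}(V,m)$ the set of $m$-dimensional subspaces ($1\le m<\dim V$). $\|\cdot\|,|||\cdot|||$ are arbitrary norms on $V$, $\|u\|^*:=\max_{\|x\|=1}\langle u,x\rangle$. For $v\in K\setminus\{0\}$ and $x\in V$, $\lambda_v(x):=\sup\{t\in\mathbb R: x-tv\in K\}\in[-\infty,\infty)$, and $\sigma(L):=\min_{v\in K,|||v|||=1}\max_{x\in L,\|x\|\le1}\lambda_v(x)$. *)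

(* Defs.v *)
From mathcomp Require Import ssreflect ssrfun ssrbool eqtype ssrnat fintype bigop.
From Stdlib Require Import Reals Classical ClassicalEpsilon.

Set Implicit Arguments.
Unset Strict Implicit.

Local Open Scope R_scope.

(* V = R^n with the standard inner product (any finite-dim. real inner
   product space is isometric to this). *)
Definition vec (n : nat) := 'I_n -> R.

Definition vzero {n} : vec n := fun _ => 0.
Definition vadd {n} (x y : vec n) : vec n := fun i => x i + y i.
Definition vscale {n} (a : R) (x : vec n) : vec n := fun i => a * x i.
Definition vopp {n} (x : vec n) : vec n := fun i => - x i.
Definition vsub {n} (x y : vec n) : vec n := fun i => x i - y i.
Definition inner {n} (x y : vec n) : R := \big[Rplus/0]_(i < n) (x i * y i).

Definition lincomb {n m} (c : 'I_m -> R) (b : 'I_m -> vec n) : vec n :=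
  fun j => \big[Rplus/0]_(i < m) (c i * b i j).

Definition in_Gr {n} (L : vec n -> Prop) (m : nat) : Prop :=
  exists b : 'I_m -> vec n,
    (forall c : 'I_m -> R, lincomb c b = vzero -> forall i, c i = 0) /\
    (forall x, L x <-> exists c, x = lincomb c b).

Definition orth {n} (L : vec n -> Prop) : vec n -> Prop :=
  fun y => forall x, L x -> inner x y = 0.

Definition is_norm {n} (N : vec n -> R) : Prop :=
  (forall x, 0 <= N x) /\
  (forall x, N x = 0 -> x = vzero) /\
  (forall a x, N (vscale a x) = Rabs a * N x) /\
  (forall x y, N (vadd x y) <= N x + N y).

(* Topology of R^n (all norms equivalent; we use coordinatewise notions) *)
Definition closedV {n} (K : vec n -> Prop) : Prop :=
  forall (xs : nat -> vec n) (x : vec n),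
    (forall k, K (xs k)) -> (forall i, Un_cv (fun k => xs k i) (x i)) -> K x.

Definition int_pt {n} (K : vec n -> Prop) (x : vec n) : Prop :=
  exists eps, 0 < eps /\ forall y : vec n, (forall i, Rabs (y i - x i) < eps) -> K y.

Definition regular_cone {n} (K : vec n -> Prop) : Prop :=
  closedV K /\
  K vzero /\
  (forall x t, K x -> 0 <= t -> K (vscale t x)) /\
  (forall x y, K x -> K y -> K (vadd x y)) /\
  (forall x, K x -> K (vopp x) -> x = vzero) /\
  (exists x, int_pt K x).

Definition dual_cone {n} (K : vec n -> Prop) : vec n -> Prop :=
  fun u => forall x, K x -> 0 <= inner u x.

Inductive ER := ERfin (r : R) | ERminf | ERpinf.

Definition ER_le (a b : ER) : Prop :=
  match a, b with
  | ERminf, _ => True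
  | _, ERpinf => True
  | ERfin x, ERfin y => x <= y
  | _, _ => False
  end.

Definition ERopp (a : ER) : ER :=
  match a with ERfin x => ERfin (- x) | ERminf => ERpinf | ERpinf => ERminf end.

Lemma not_or_not_bound (A : Prop) (E : R -> Prop) : ~ (A \/ ~ bound E) -> bound E.
Proof. intro H. apply NNPP. intro H'. apply H. right. exact H'. Qed.

Definition supER (S : ER -> Prop) : ER :=
  let E := fun r => S (ERfin r) in
  match excluded_middle_informative (S ERpinf \/ ~ bound E) with
  | left _ => ERpinf
  | right H =>
      match excluded_middle_informative (exists r, E r) with
      | left He => ERfin (proj1_sig (completeness E (not_or_not_bound H) He))
      | right _ => ERminf
      end
  end.

Definition infER (S : ER -> Prop) : ER := ERopp (supER (fun e => S (ERopp e))).

Definition supOver {A} (P : A -> Prop) (f : A -> ER) : ER :=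
  supER (fun e => exists a, P a /\ f a = e).
Definition infOver {A} (P : A -> Prop) (f : A -> ER) : ER :=
  infER (fun e => exists a, P a /\ f a = e).

Definition IsMaxOf {A} (P : A -> Prop) (f : A -> ER) (m : ER) : Prop :=
  (exists a, P a /\ f a = m) /\ (forall a, P a -> ER_le (f a) m).
Definition IsMinOf {A} (P : A -> Prop) (f : A -> ER) (m : ER) : Prop :=
  (exists a, P a /\ f a = m) /\ (forall a, P a -> ER_le m (f a)).

Definition lam {n} (K : vec n -> Prop) (v x : vec n) : ER :=
  supER (fun e => exists t, e = ERfin t /\ K (vsub x (vscale t v))).

Definition dualnorm {n} (N : vec n -> R) (u : vec n) : ER :=
  supOver (fun x => N x = 1) (fun x => ERfin (inner u x)).

Definition sigmaL {n} (K : vec n -> Prop) (N N3 : vec n -> R) (L : vec n -> Prop) : ER :=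
  infOver (fun v => K v /\ N3 v = 1)
          (fun v => supOver (fun x => L x /\ N x <= 1) (lam K v)).

(* Main.v *)
From HB Require Import structures.
Require Import Defs.
From mathcomp Require Import ssreflect ssrfun ssrbool eqtype ssrnat seq fintype bigop.
From Stdlib Require Import Reals Lra Lia Classical ClassicalEpsilon FunctionalExtensionality.
Local Open Scope R_scope.

Module Aux.
Set Implicit Arguments.
Unset Strict Implicit.
HB.instance Definition _ := Monoid.isComLaw.Build R 0 Rplus (fun a b c => esym (Rplus_assoc a b c)) Rplus_comm Rplus_0_l.

Section Sums.
Variable n : nat.
Implicit Types F G : 'I_n -> R.

Lemma sum_ge0 F : (forall i, 0 <= F i) -> 0 <= \big[Rplus/0]_(i < n) F i.
Proof. move=> H; elim/big_rec: _ => [|i y _ Hy]; [lra| have := H i; lra]. Qed.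

Lemma sum_le F G : (forall i, F i <= G i) ->
  \big[Rplus/0]_(i < n) F i <= \big[Rplus/0]_(i < n) G i.
Proof. move=> H; elim/big_rec2: _ => [|i y1 y2 _ Hy]; [lra| have := H i; lra]. Qed.

Lemma sum_scal a F : \big[Rplus/0]_(i < n) (a * F i) = a * \big[Rplus/0]_(i < n) F i.
Proof. elim/big_rec2: _ => [|i y1 y2 _ ->]; ring. Qed.

Lemma sum_add F G : \big[Rplus/0]_(i < n) (F i + G i) =
   \big[Rplus/0]_(i < n) F i + \big[Rplus/0]_(i < n) G i.
Proof. by rewrite big_split. Qed.

Lemma sum_opp F : \big[Rplus/0]_(i < n) (- F i) = - \big[Rplus/0]_(i < n) F i.
Proof. elim/big_rec2: _ => [|i y1 y2 _ ->]; ring. Qed.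

Lemma sum_ext F G : (forall i, F i = G i) ->
  \big[Rplus/0]_(i < n) F i = \big[Rplus/0]_(i < n) G i.
Proof. move=> H; apply: eq_bigr => i _; exact: H. Qed.

Lemma sum_abs F : Rabs (\big[Rplus/0]_(i < n) F i) <= \big[Rplus/0]_(i < n) Rabs (F i).
Proof.
elim/big_rec2: _ => [|i y1 y2 _ Hy]; first by rewrite Rabs_R0; lra.
have := Rabs_triang (F i) y2; lra.
Qed.

Lemma term_le_sum F j : (forall i, 0 <= F i) -> F j <= \big[Rplus/0]_(i < n) F i.
Proof.
move=> H; rewrite (bigD1 j) //=.
have : 0 <= \big[Rplus/0]_(i < n | i != j) F i.
  elim/big_rec: _ => [|i y _ Hy]; [lra| have := H i; lra].
move=> Hs; rewrite -{1}(Rplus_0_r (F j)); apply: Rplus_le_compat_l; exact: Hs.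
Qed.

Lemma sum_eq0 F j : (forall i, 0 <= F i) -> \big[Rplus/0]_(i < n) F i = 0 -> F j = 0.
Proof. move=> H Hs; have := @term_le_sum F j H; have := H j; lra. Qed.

Lemma sum_cv (a : nat -> 'I_n -> R) (l : 'I_n -> R) :
  (forall i, Un_cv (fun k => a k i) (l i)) ->
  Un_cv (fun k => \big[Rplus/0]_(i < n) a k i) (\big[Rplus/0]_(i < n) l i).
Proof.
move=> H.
have G : forall r, Un_cv (fun k => \big[Rplus/0]_(i <- r) a k i) (\big[Rplus/0]_(i <- r) l i).
  elim=> [|j r IH].
    rewrite big_nil. move=> e He; exists 0%nat => k _.
    rewrite big_nil /R_dist; rewrite Rminus_0_r Rabs_R0; lra.
  rewrite big_cons.
  have -> : (fun k => \big[Rplus/0]_(i <- (cons j r)) a k i) =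
            (fun k => a k j + \big[Rplus/0]_(i <- r) a k i).
    by apply: functional_extensionality => k; rewrite big_cons.
  exact: CV_plus.
exact: G.
Qed.

End Sums.


Lemma choice_fun {A B : Type} (P : A -> B -> Prop) :
  (forall a, exists b, P a b) -> exists f : A -> B, forall a, P a (f a).
Proof.
move=> H; exists (fun a => proj1_sig (constructive_indefinite_description _ (H a))).
move=> a; exact: (proj2_sig (constructive_indefinite_description _ (H a))).
Qed.

Definition strict (phi : nat -> nat) := forall k, (phi k < phi (S k))%coq_nat.

Lemma strict_ge phi : strict phi -> forall k, (k <= phi k)%coq_nat.
Proof. move=> H; elim=> [|k IH]; first lia. have := H k; lia. Qed.

Lemma strict_mono phi : strict phi -> forall a b, (a <= b)%coq_nat -> (phi a <= phi b)%coq_nat.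
Proof.
move=> H a b Hab; elim: b Hab => [|b IH] Hab.
  have -> : a = 0%nat by lia. lia.
case: (Nat.eq_dec a (S b)) => [->|Hne]; first lia.
have := H b; have := IH ltac:(lia); lia.
Qed.

Lemma strict_comp phi psi : strict phi -> strict psi -> strict (fun k => phi (psi k)).
Proof.
move=> H1 H2 k; have := H2 k => h.
have := strict_mono H1 h; have := H1 (psi k); lia.
Qed.

Lemma cv_subseq u l phi : strict phi -> Un_cv u l -> Un_cv (fun k => u (phi k)) l.
Proof.
move=> Hp Hu e He; case: (Hu e He) => N HN; exists N => k Hk.
apply: HN; have := strict_ge Hp k; lia.
Qed.

Lemma cv_const c : Un_cv (fun _ => c) c.
Proof. move=> e He; exists 0%nat => k _; rewrite /R_dist Rminus_eq_0 Rabs_R0; lra. Qed.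

Lemma inv_INR_S_cv : Un_cv (fun k => / (INR k + 1)) 0.
Proof.
move=> e He; case: (archimed_cor1 e He) => N [HN HN0]; exists N => k Hk.
rewrite /R_dist Rminus_0_r.
have HkN : INR N <= INR k by apply: le_INR; lia.
have H0 : 0 < INR N by apply: lt_0_INR; lia.
rewrite Rabs_right; last by (apply: Rle_ge; apply: Rlt_le; apply: Rinv_0_lt_compat; lra).
apply: Rle_lt_trans HN; apply: Rinv_le_contravar; lra.
Qed.

Lemma BW1 (u : nat -> R) M : (forall k, Rabs (u k) <= M) ->
  exists phi, strict phi /\ exists l, Un_cv (fun k => u (phi k)) l.
Proof.
move=> Hb.
have [l Hl] : exists l, ValAdh u l.
  apply: (Bolzano_Weierstrass u (fun c => -M <= c <= M)); first exact: compact_P3.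
  move=> k; have := Hb k => h; split; [have := Rabs_Ropp (u k); have := Rle_abs (- u k)|have := Rle_abs (u k)]; lra.
have H : forall kN : nat * nat, exists p, (kN.2 <= p)%coq_nat /\ Rabs (u p - l) < / (INR kN.1 + 1).
  case=> k N /=.
  have Hpos : 0 < / (INR k + 1) by apply: Rinv_0_lt_compat; have := pos_INR k; lra.
  case: (Hl (disc l (mkposreal _ Hpos)) N) => [|p [Hp1 Hp2]].
    by exists (mkposreal _ Hpos) => y Hy.
  exists p; split; [exact: Hp1| exact: Hp2].
case: (choice_fun H) => g Hg.
pose phi := fix phi k := match k with 0 => g (0, 0)%nat | S k' => g (k, S (phi k')) end.
have P1 : strict phi by move=> k; have := (Hg (S k, S (phi k))).1; simpl; lia.
have P2 : forall k, Rabs (u (phi k) - l) < / (INR k + 1).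
  by case=> [|k]; [exact: (Hg (0,0)%nat).2 | exact: (Hg (S k, S (phi k))).2].
exists phi; split => //; exists l => e He.
case: (inv_INR_S_cv He) => N HN; exists N => k Hk.
apply: Rlt_trans (P2 k) _; have := HN k Hk; rewrite /R_dist Rminus_0_r => h.
apply: Rle_lt_trans h; exact: Rle_abs.
Qed.

Definition conv {n} (xs : nat -> vec n) (x : vec n) := forall i, Un_cv (fun k => xs k i) (x i).

Lemma BWn n (xs : nat -> vec n) M : (forall k i, Rabs (xs k i) <= M) ->
  exists phi, strict phi /\ exists x, conv (fun k => xs (phi k)) x.
Proof.
move=> Hb.
have G : forall r : list (ordinal n), exists phi, strict phi /\ exists x : vec n,
    forall i, i \in r -> Un_cv (fun k => xs (phi k) i) (x i).
  elim=> [|j r [phi [Hphi [x Hx]]]].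
    exists (fun k : nat => k); split; first by move=> k /=; lia.
    by exists vzero => i.
  have [psi [Hpsi [l Hl]]] := @BW1 (fun k => xs (phi k) j) M (fun k => Hb _ j).
  exists (fun k => phi (psi k)); split; first exact: strict_comp.
  exists (fun i => if i == j then l else x i) => i.
  rewrite in_cons; case: (eqVneq i j) => [->|Hne] //= Hi.
  exact: (cv_subseq Hpsi (Hx i Hi)).
have [phi [Hphi [x Hx]]] := G (index_enum 'I_n).
exists phi; split => //; exists x => i; apply: Hx; exact: mem_index_enum.
Qed.


Section Inner.
Variable n : nat.
Implicit Types x y z : vec n.

Lemma inner_sym x y : inner x y = inner y x.
Proof. apply: sum_ext => i; ring. Qed.
Lemma inner_addl x y z : inner (vadd x y) z = inner x z + inner y z.
Proof. rewrite /inner -sum_add; apply: sum_ext => i; rewrite /vadd; ring. Qed.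
Lemma inner_addr x y z : inner z (vadd x y) = inner z x + inner z y.
Proof. by rewrite inner_sym inner_addl !(inner_sym z). Qed.
Lemma inner_scalel a x y : inner (vscale a x) y = a * inner x y.
Proof. rewrite /inner -sum_scal; apply: sum_ext => i; rewrite /vscale; ring. Qed.
Lemma inner_scaler a x y : inner y (vscale a x) = a * inner y x.
Proof. by rewrite inner_sym inner_scalel inner_sym. Qed.
Lemma inner_subl x y z : inner (vsub x y) z = inner x z - inner y z.
Proof. rewrite /inner /Rminus -sum_opp -sum_add; apply: sum_ext => i; rewrite /vsub; ring. Qed.
Lemma inner_subr x y z : inner z (vsub x y) = inner z x - inner z y.
Proof. by rewrite inner_sym inner_subl !(inner_sym z). Qed.
Lemma inner_oppl x y : inner (vopp x) y = - inner x y.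
Proof. rewrite /inner -sum_opp; apply: sum_ext => i; rewrite /vopp; ring. Qed.
Lemma inner_zerol x : inner vzero x = 0.
Proof. rewrite /inner; elim/big_rec: _ => [|i y _ ->] //; rewrite /vzero; ring. Qed.
Lemma inner_zeror x : inner x vzero = 0.
Proof. by rewrite inner_sym inner_zerol. Qed.
Lemma inner_ge0 x : 0 <= inner x x.
Proof. apply: sum_ge0 => i; nra. Qed.
Lemma coord_sq x i : x i * x i <= inner x x.
Proof. apply: (@term_le_sum _ (fun i => x i * x i)) => j; nra. Qed.
Lemma inner_eq0 x : inner x x = 0 -> x = vzero.
Proof.
move=> H; apply: functional_extensionality => i.
have := @sum_eq0 _ (fun i => x i * x i) i (fun j => ltac:(nra)) H.
rewrite /vzero; nra.
Qed.
End Inner.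

Lemma vec_eq {n} (x y : vec n) : (forall i, x i = y i) -> x = y.
Proof. by move=> H; apply: functional_extensionality. Qed.

Section Conv.
Variable n : nat.
Lemma conv_add (xs ys : nat -> vec n) x y : conv xs x -> conv ys y ->
  conv (fun k => vadd (xs k) (ys k)) (vadd x y).
Proof. move=> H1 H2 i; exact: CV_plus. Qed.
Lemma conv_sub (xs ys : nat -> vec n) x y : conv xs x -> conv ys y ->
  conv (fun k => vsub (xs k) (ys k)) (vsub x y).
Proof. move=> H1 H2 i; exact: CV_minus. Qed.
Lemma conv_scale (a : nat -> R) al (xs : nat -> vec n) x : Un_cv a al -> conv xs x ->
  conv (fun k => vscale (a k) (xs k)) (vscale al x).
Proof. move=> H1 H2 i; exact: CV_mult. Qed.
Lemma conv_const (x : vec n) : conv (fun _ => x) x.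
Proof. move=> i; exact: cv_const. Qed.
Lemma conv_sub_seq (xs : nat -> vec n) x phi : strict phi -> conv xs x -> conv (fun k => xs (phi k)) x.
Proof. move=> Hp H i; exact: (cv_subseq Hp (H i)). Qed.
Lemma conv_inner (xs ys : nat -> vec n) x y : conv xs x -> conv ys y ->
  Un_cv (fun k => inner (xs k) (ys k)) (inner x y).
Proof. move=> H1 H2; apply: (@sum_cv n (fun k i => xs k i * ys k i)) => i; exact: CV_mult. Qed.
End Conv.

Lemma abs_le1 (r : R) : r * r <= 1 -> Rabs r <= 1.
Proof. move=> H; case: (Rle_dec (Rabs r) 1) => // h; exfalso; move: h; rewrite /Rabs; case: Rcase_abs => ? ?; nra. Qed.

Lemma cv_le_lim (u v : nat -> R) lu lv : (forall k, u k <= v k) -> Un_cv u lu -> Un_cv v lv -> lu <= lv.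
Proof. move=> H H1 H2; exact: (Rle_cv_lim H H1 H2). Qed.

Lemma cv_abs_bound (u : nat -> R) l : Un_cv u l -> exists M, forall k, Rabs (u k) <= M.
Proof.
move=> H; case: (H 1 Rlt_0_1) => N HN.
have [M HM] : exists M, forall k, (k <= N)%coq_nat -> Rabs (u k) <= M.
  elim: N {HN} => [|N [M HM]].
    exists (Rabs (u 0%nat)) => k Hk; have -> : k = 0%nat by lia. lra.
  exists (Rmax M (Rabs (u N.+1))) => k Hk.
  case: (Nat.eq_dec k N.+1) => [->|Hne]; first exact: Rmax_r.
  apply: Rle_trans (Rmax_l _ _); apply: HM; lia.
exists (Rmax M (Rabs l + 1)) => k.
case: (Compare_dec.le_lt_dec k N) => Hk; first by apply: Rle_trans (Rmax_l _ _); exact: HM.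
apply: Rle_trans (Rmax_r _ _).
have := HN k ltac:(lia); rewrite /R_dist => h.
have := Rabs_triang_inv (u k) l; lra.
Qed.


Definition sabs {n} (x : vec n) := \big[Rplus/0]_(i < n) Rabs (x i).

Lemma sabs_ge0 n (x : vec n) : 0 <= sabs x.
Proof. apply: sum_ge0 => i; exact: Rabs_pos. Qed.
Lemma coord_le_sabs n (x : vec n) i : Rabs (x i) <= sabs x.
Proof. apply: (@term_le_sum _ (fun i => Rabs (x i))) => j; exact: Rabs_pos. Qed.
Lemma sabs_scale n a (x : vec n) : sabs (vscale a x) = Rabs a * sabs x.
Proof. rewrite /sabs -sum_scal; apply: sum_ext => i; rewrite /vscale Rabs_mult //. Qed.
Lemma sabs_cv n (xs : nat -> vec n) x : conv xs x -> Un_cv (fun k => sabs (xs k)) (sabs x).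
Proof. move=> H; apply: (@sum_cv n (fun k i => Rabs (xs k i))) => i; exact: cv_cvabs. Qed.
Lemma sabs_sub_cv n (xs : nat -> vec n) x : conv xs x -> Un_cv (fun k => sabs (vsub (xs k) x)) 0.
Proof.
move=> H; have := sabs_cv (conv_sub H (conv_const x)).
have -> : sabs (vsub x x) = 0.
  rewrite /sabs; elim/big_rec: _ => [|i y _ ->] //; rewrite /vsub Rminus_eq_0 Rabs_R0; ring.
done.
Qed.
Lemma sabs_eq0 n (x : vec n) : sabs x = 0 -> x = vzero.
Proof.
move=> H; apply: vec_eq => i.
have := @sum_eq0 _ (fun i => Rabs (x i)) i (fun j => Rabs_pos _) H.
rewrite /vzero => h; case: (Req_dec (x i) 0) => // hne; exfalso; have := Rabs_pos_lt _ hne; lra.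
Qed.

Section Norm.
Variable n : nat.
Variable N : vec n -> R.
Hypothesis HN : is_norm N.

Lemma N_ge0 x : 0 <= N x. Proof. by case: HN => [H _]; apply: H. Qed.
Lemma N_eq0 x : N x = 0 -> x = vzero. Proof. by case: HN => [_ [H _]]; apply: H. Qed.
Lemma N_scale a x : N (vscale a x) = Rabs a * N x. Proof. by case: HN => [_ [_ [H _]]]; apply: H. Qed.
Lemma N_tri x y : N (vadd x y) <= N x + N y. Proof. by case: HN => [_ [_ [_ H]]]; apply: H. Qed.

Lemma N_zero : N vzero = 0.
Proof.
have -> : (vzero : vec n) = vscale 0 vzero by apply: vec_eq => i; rewrite /vscale /vzero; ring.
rewrite N_scale Rabs_R0; ring.
Qed.
Lemma N_sub_sym x y : N (vsub x y) = N (vsub y x).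
Proof.
have -> : vsub x y = vscale (-1) (vsub y x) by apply: vec_eq => i; rewrite /vscale /vsub; ring.
rewrite N_scale Rabs_Ropp Rabs_R1; ring.
Qed.
Lemma N_tri_sub x y : N x <= N y + N (vsub x y).
Proof.
have -> : x = vadd y (vsub x y) by apply: vec_eq => i; rewrite /vadd /vsub; ring.
have -> : vsub (vadd y (vsub x y)) y = vsub x y by apply: vec_eq => i; rewrite /vadd /vsub; ring.
exact: N_tri.
Qed.

Definition ebas (i : 'I_n) : vec n := fun j => if i == j then 1 else 0.

Lemma N_upper : exists Ce, 0 <= Ce /\ forall x, N x <= Ce * sabs x.
Proof.
pose Ce := \big[Rplus/0]_(i < n) N (ebas i).
have Ce0 : 0 <= Ce by apply: sum_ge0 => i; exact: N_ge0.
exists Ce; split => // x.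
have G : forall r : seq 'I_n, N (fun j => \big[Rplus/0]_(i <- r) (x i * ebas i j)) <=
                   \big[Rplus/0]_(i <- r) (Rabs (x i) * N (ebas i)).
  elim=> [|j r IH].
    rewrite big_nil.
    have -> : (fun j0 : 'I_n => \big[Rplus/0]_(i <- nil) (x i * ebas i j0)) = vzero.
      by apply: vec_eq => i; rewrite big_nil.
    rewrite N_zero; lra.
  have -> : (fun j0 => \big[Rplus/0]_(i <- (cons j r)) (x i * ebas i j0)) =
     vadd (vscale (x j) (ebas j)) (fun j0 => \big[Rplus/0]_(i <- r) (x i * ebas i j0)).
    by apply: vec_eq => i; rewrite big_cons.
  rewrite big_cons; apply: Rle_trans (N_tri _ _) _; rewrite N_scale; lra.
have Ex : (fun j => \big[Rplus/0]_(i < n) (x i * ebas i j)) = x.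
  apply: vec_eq => j; rewrite (bigD1 j) //= big1 /ebas ?eqxx; first ring.
  by move=> i /negbTE ->; ring.
have := G (index_enum 'I_n); rewrite [X in N X]Ex => h; apply: Rle_trans h _.
have -> : Ce * sabs x = \big[Rplus/0]_(i < n) (Ce * Rabs (x i)) by rewrite sum_scal.
apply: sum_le => i; rewrite (Rmult_comm Ce).
apply: Rmult_le_compat_l; first exact: Rabs_pos.
exact: (@term_le_sum _ (fun i => N (ebas i)) i (fun j => N_ge0 _)).
Qed.

Lemma N_cont (xs : nat -> vec n) x : conv xs x -> Un_cv (fun k => N (xs k)) (N x).
Proof.
move=> H; have [Ce [Ce0 HCe]] := N_upper.
have Hs := sabs_sub_cv H.
move=> e He.
case: (Hs (e / (Ce + 1))) => [|K HK]; first by apply: Rdiv_lt_0_compat; lra.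
exists K => k Hk; have := HK k Hk; rewrite /R_dist Rminus_0_r => h.
rewrite Rabs_right in h; last by apply: Rle_ge; exact: sabs_ge0.
have h1 := N_tri_sub (xs k) x.
have h2 := N_tri_sub x (xs k).
rewrite N_sub_sym in h2.
have h3 := HCe (vsub (xs k) x).
have h4 : Ce * sabs (vsub (xs k) x) < e.
  have : Ce * sabs (vsub (xs k) x) <= (Ce + 1) * sabs (vsub (xs k) x) by have := sabs_ge0 (vsub (xs k) x); nra.
  have : (Ce + 1) * sabs (vsub (xs k) x) < (Ce + 1) * (e / (Ce + 1)) by apply: Rmult_lt_compat_l; lra.
  have -> : (Ce + 1) * (e / (Ce + 1)) = e by field; lra.
  lra.
rewrite /R_dist; apply: Rabs_def1; lra.
Qed.

Lemma N_lower : exists c, 0 < c /\ forall x, sabs x <= c * N x.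
Proof.
apply: NNPP => Hno.
have H : forall j : nat, exists x, (INR j + 1) * N x < sabs x.
  move=> j; apply: NNPP => Hj; apply: Hno; exists (INR j + 1); split.
    have := pos_INR j; lra.
  move=> x; apply: Rnot_lt_le => hx; apply: Hj; by exists x.
case: (choice_fun H) => xs Hxs.
have Hpos : forall j, 0 < sabs (xs j).
  move=> j; have := Hxs j; have := N_ge0 (xs j); have := pos_INR j; nra.
pose ys j := vscale (/ sabs (xs j)) (xs j).
have Ys1 : forall j, sabs (ys j) = 1.
  move=> j; rewrite /ys sabs_scale Rabs_right; last by apply: Rle_ge; apply: Rlt_le; apply: Rinv_0_lt_compat; exact: Hpos.
  by field; apply: Rgt_not_eq; apply: Hpos.
have YsN : forall j, N (ys j) <= / (INR j + 1).
  move=> j; rewrite /ys N_scale Rabs_right; last by apply: Rle_ge; apply: Rlt_le; apply: Rinv_0_lt_compat; exact: Hpos.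
  have hp := Hpos j; have hx := Hxs j; have hj := pos_INR j.
  apply: Rlt_le.
  apply: (Rmult_lt_reg_l (sabs (xs j) * (INR j + 1))); first nra.
  have -> : sabs (xs j) * (INR j + 1) * (/ sabs (xs j) * N (xs j)) = (INR j + 1) * N (xs j) by field; lra.
  have -> : sabs (xs j) * (INR j + 1) * / (INR j + 1) = sabs (xs j) by field; lra.
  exact: hx.
have Yb : forall j i, Rabs (ys j i) <= 1 by move=> j i; rewrite -(Ys1 j); exact: coord_le_sabs.
have [phi [Hphi [y Hy]]] := BWn Yb.
have Sy : sabs y = 1.
  have := sabs_cv Hy; have -> : (fun k => sabs (ys (phi k))) = (fun _ => 1).
    by apply: functional_extensionality => k; rewrite Ys1.
  move=> h; exact: (UL_sequence _ _ _ h (cv_const 1)).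
have Ny : N y <= 0.
  apply: (cv_le_lim (fun k => YsN (phi k)) (N_cont Hy)).
  exact: (cv_subseq Hphi inv_INR_S_cv).
have : N y = 0 by have := N_ge0 y; lra.
move/N_eq0 => hy; rewrite hy in Sy.
have : sabs (vzero : vec n) = 0.
  rewrite /sabs; elim/big_rec: _ => [|i s _ ->] //; rewrite /vzero Rabs_R0; ring.
lra.
Qed.

End Norm.


Lemma ER_le_trans a b c : ER_le a b -> ER_le b c -> ER_le a c.
Proof. case: a => [x||]; case: b => [y||]; case: c => [z||] //=; lra. Qed.
Lemma ER_le_antisym a b : ER_le a b -> ER_le b a -> a = b.
Proof. case: a => [x||]; case: b => [y||] //= h1 h2; f_equal; lra. Qed.
Lemma ER_le_opp a b : ER_le a b -> ER_le (ERopp b) (ERopp a).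
Proof. case: a => [x||]; case: b => [y||] //=; lra. Qed.
Lemma ERopp_inv a : ERopp (ERopp a) = a.
Proof. case: a => [x||] //=; by rewrite Ropp_involutive. Qed.

Lemma supER_ge (S : ER -> Prop) e : S e -> ER_le e (supER S).
Proof.
move=> He; rewrite /supER.
case: excluded_middle_informative => [_|H]; first by case: e He.
case: excluded_middle_informative => [Hex|Hnex].
  case: (completeness _ _ _) => l [Hub _] /=.
  case: e He => [x||] He //=; first exact: Hub.
  by exfalso; apply: H; left.
case: e He => [x||] He //=.
  by exfalso; apply: Hnex; exists x.
by exfalso; apply: H; left.
Qed.

Lemma supER_le (S : ER -> Prop) M : (forall e, S e -> ER_le e M) -> ER_le (supER S) M.
Proof.
move=> HM; rewrite /supER.
case: excluded_middle_informative => [[Hp|Hnb]|H].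
- by have := HM _ Hp; case: M {HM}.
- case: M HM => [m||] HM //=.
  + apply: Hnb; exists m => r Hr; by have := HM _ Hr.
  + apply: Hnb; exists 0 => r Hr; by have := HM _ Hr.
- case: excluded_middle_informative => [Hex|Hnex] //=.
  case: (completeness _ _ _) => l [_ Hl] /=.
  case: M HM => [m||] HM //=.
  + apply: Hl => r Hr; by have := HM _ Hr.
  + case: Hex => r Hr; by have := HM _ Hr.
Qed.

Lemma infER_le (S : ER -> Prop) e : S e -> ER_le (infER S) e.
Proof.
move=> He; rewrite /infER.
have : ER_le (ERopp e) (supER (fun e0 => S (ERopp e0))) by apply: supER_ge; rewrite ERopp_inv.
move/ER_le_opp; by rewrite ERopp_inv.
Qed.

Lemma infER_ge (S : ER -> Prop) M : (forall e, S e -> ER_le M e) -> ER_le M (infER S).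
Proof.
move=> HM; rewrite /infER.
have : ER_le (supER (fun e0 => S (ERopp e0))) (ERopp M).
  apply: supER_le => e He; have := ER_le_opp (HM _ He); by rewrite ERopp_inv.
move/ER_le_opp; by rewrite ERopp_inv.
Qed.

Lemma supOver_ge A (P : A -> Prop) f a : P a -> ER_le (f a) (supOver P f).
Proof. move=> Ha; apply: supER_ge; by exists a. Qed.
Lemma supOver_le A (P : A -> Prop) f M : (forall a, P a -> ER_le (f a) M) -> ER_le (supOver P f) M.
Proof. move=> H; apply: supER_le => e [a [Ha <-]]; exact: H. Qed.
Lemma infOver_le A (P : A -> Prop) f a : P a -> ER_le (infOver P f) (f a).
Proof. move=> Ha; apply: infER_le; by exists a. Qed.
Lemma infOver_ge A (P : A -> Prop) f M : (forall a, P a -> ER_le M (f a)) -> ER_le M (infOver P f).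
Proof. move=> H; apply: infER_ge => e [a [Ha <-]]; exact: H. Qed.

Lemma IsMax_sup A (P : A -> Prop) f M : IsMaxOf P f M -> supOver P f = M.
Proof.
case=> [[a [Ha <-]] H]; apply: ER_le_antisym; [exact: supOver_le| exact: supOver_ge].
Qed.
Lemma IsMin_inf A (P : A -> Prop) f M : IsMinOf P f M -> infOver P f = M.
Proof.
case=> [[a [Ha <-]] H]; apply: ER_le_antisym; [exact: infOver_le| exact: infOver_ge].
Qed.


Lemma cv_squeeze0 (u w : nat -> R) C : (forall k, Rabs (u k) <= C * w k) -> Un_cv w 0 -> Un_cv u 0.
Proof.
move=> H Hw e He.
case: (Hw (e / (Rabs C + 1))) => [|K HK]; first by apply: Rdiv_lt_0_compat; have := Rabs_pos C; lra.
exists K => k Hk; have := HK k Hk; rewrite /R_dist !Rminus_0_r => h.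
apply: Rle_lt_trans (H k) _.
have hC := Rle_abs C; have hC0 := Rabs_pos C.
have h1 : C * w k <= Rabs C * Rabs (w k).
  apply: Rle_trans (Rle_abs _) _; rewrite Rabs_mult; lra.
have : Rabs C * Rabs (w k) <= (Rabs C + 1) * Rabs (w k) by have := Rabs_pos (w k); nra.
have : (Rabs C + 1) * Rabs (w k) < (Rabs C + 1) * (e / (Rabs C + 1)) by apply: Rmult_lt_compat_l; lra.
have -> : (Rabs C + 1) * (e / (Rabs C + 1)) = e by field; lra.
lra.
Qed.

Lemma sabs_add n (x y : vec n) : sabs (vadd x y) <= sabs x + sabs y.
Proof. rewrite /sabs -sum_add; apply: sum_le => i; exact: Rabs_triang. Qed.

Section LinSub.
Variables n m : nat.
Variable b : 'I_m -> vec n.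

Lemma lincomb_add c d : lincomb (vadd c d) b = vadd (lincomb c b) (lincomb d b).
Proof. apply: vec_eq => j; rewrite /lincomb /vadd -sum_add; apply: sum_ext => i; ring. Qed.
Lemma lincomb_scale a c : lincomb (vscale a c) b = vscale a (lincomb c b).
Proof. apply: vec_eq => j; rewrite /lincomb /vscale -sum_scal; apply: sum_ext => i; ring. Qed.
Lemma lincomb_zero : lincomb vzero b = vzero.
Proof. apply: vec_eq => j; rewrite /lincomb /vzero; elim/big_rec: _ => [|i y _ ->] //; ring. Qed.
Lemma lincomb_conv (cs : nat -> vec m) c : conv cs c -> conv (fun k => lincomb (cs k) b) (lincomb c b).
Proof. move=> H j; apply: (@sum_cv m (fun k i => cs k i * b i j)) => i; apply: CV_mult => //; exact: cv_const. Qed.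
End LinSub.

Section Sub.
Variables n m : nat.
Variable L : vec n -> Prop.
Hypothesis HL : in_Gr L m.

Lemma L_add x y : L x -> L y -> L (vadd x y).
Proof.
case: HL => b [_ Hb] /Hb [c ->] /Hb [d ->]; apply/Hb; exists (vadd c d); by rewrite lincomb_add.
Qed.
Lemma L_scale a x : L x -> L (vscale a x).
Proof. case: HL => b [_ Hb] /Hb [c ->]; apply/Hb; exists (vscale a c); by rewrite lincomb_scale. Qed.
Lemma L_zero : L vzero.
Proof. case: HL => b [_ Hb]; apply/Hb; exists vzero; by rewrite lincomb_zero. Qed.

Lemma L_closed (xs : nat -> vec n) x : (forall k, L (xs k)) -> conv xs x -> L x.
Proof.
case: HL => b [Hind Hb] HxL Hx.
pose Nb (c : vec m) := sabs (lincomb c b).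
have HNb : is_norm Nb.
  split; first by move=> c; exact: sabs_ge0.
  split.
    move=> c /sabs_eq0 h; apply: vec_eq => i; exact: Hind _ h i.
  split; first by move=> a c; rewrite /Nb lincomb_scale sabs_scale.
  by move=> c d; rewrite /Nb lincomb_add; exact: sabs_add.
have [cb [cb0 Hcb]] := @N_lower m Nb HNb.
have [cs Hcs] : exists cs : nat -> vec m, forall k, xs k = lincomb (cs k) b.
  case: (@choice_fun nat (vec m) (fun k c => xs k = lincomb c b)) => [k|f Hf]; [by apply/Hb | by exists f].
have [M HM] := cv_abs_bound (sabs_cv Hx).
have Bd : forall k i, Rabs (cs k i) <= cb * M.
  move=> k i; apply: Rle_trans (coord_le_sabs _ i) _; apply: Rle_trans (Hcb _) _.
  apply: Rmult_le_compat_l; first lra.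
  rewrite /Nb -Hcs; apply: Rle_trans (HM k); exact: Rle_abs.
have [phi [Hphi [c Hc]]] := BWn Bd.
apply/Hb; exists c; apply: vec_eq => j.
have h1 := lincomb_conv b Hc j.
have h2 := cv_subseq Hphi (Hx j).
apply: (UL_sequence _ _ _ h2); move: h1; congr Un_cv; apply: functional_extensionality => k; by rewrite Hcs.
Qed.
End Sub.


Definition convexV {d} (C : vec d -> Prop) := forall x y th, C x -> C y -> 0 <= th <= 1 ->
  C (vadd (vscale (1 - th) x) (vscale th y)).

Lemma quad_nonneg A W : 0 <= W -> (forall th, 0 < th <= 1 -> 0 <= 2 * th * A + th * th * W) -> 0 <= A.
Proof.
move=> W0 H; apply: Rnot_lt_le => hA.
pose th := - A / (W - A).
have hWA : 0 < W - A by lra.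
have h0 : 0 < th by rewrite /th; apply: Rdiv_lt_0_compat; lra.
have h1 : th <= 1.
  rewrite /th; apply: (Rmult_le_reg_l (W - A)) => //.
  have -> : (W - A) * (- A / (W - A)) = - A by field; lra.
  lra.
have := H th (conj h0 h1).
have -> : 2 * th * A + th * th * W = th * (A * (W - 2 * A) / (W - A)).
  rewrite /th; field; lra.
have : A * (W - 2 * A) / (W - A) < 0.
  have -> : A * (W - 2 * A) / (W - A) = (A * (W - 2 * A)) * / (W - A) by field; lra.
  have : 0 < / (W - A) by apply: Rinv_0_lt_compat.
  have : A * (W - 2 * A) < 0 by nra.
  move=> *; nra.
nra.
Qed.

Lemma abs_le_sq1 a : Rabs a <= a * a + 1.
Proof. rewrite /Rabs; case: Rcase_abs => h; nra. Qed.

Lemma inner_expand d (a w : vec d) t :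
  inner (vadd a (vscale t w)) (vadd a (vscale t w)) = inner a a + 2 * t * inner a w + t * t * inner w w.
Proof. rewrite inner_addl !inner_addr !inner_scalel !inner_scaler (inner_sym w a); ring. Qed.

Section Sep.
Variable d : nat.
Variable C : vec d -> Prop.
Hypotheses (Cconv : convexV C) (Ccl : closedV C) (Cne : exists c, C c).

Lemma separation p : ~ C p -> exists q, inner q q = 1 /\ forall c, C c -> inner q c <= inner q p.
Proof.
move=> Cp.
pose f c := inner (vsub c p) (vsub c p).
pose D r := exists c, C c /\ r = - f c.
case: Cne => c0 C0.
have D0 : D (- f c0) by exists c0.
have Db : bound D by exists 0 => r [c [_ ->]]; have := inner_ge0 (vsub c p); rewrite /f; lra.
case: (completeness D Db (ex_intro _ _ D0)) => sg [Hub Hlub].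
have Hf : forall c, C c -> - sg <= f c.
  move=> c Cc; have := Hub _ (ex_intro _ c (conj Cc erefl)); lra.
have sg0 : sg <= 0 by apply: Hlub => r [c [_ ->]]; have := inner_ge0 (vsub c p); rewrite /f; lra.
have H : forall j : nat, exists c, C c /\ f c < - sg + / (INR j + 1).
  move=> j; apply: NNPP => Hj.
  have : sg <= sg - / (INR j + 1).
    apply: Hlub => r [c [Cc ->]]; apply: Rnot_lt_le => hc; apply: Hj; exists c; split => //; lra.
  have : 0 < / (INR j + 1) by apply: Rinv_0_lt_compat; have := pos_INR j; lra.
  lra.
case: (choice_fun H) => cs Hcs.
have Bd : forall k i, Rabs (cs k i) <= sabs p + (- sg + 1) + 1.
  move=> k i.
  have h1 : (cs k i - p i) * (cs k i - p i) <= inner (vsub (cs k) p) (vsub (cs k) p) := coord_sq (vsub (cs k) p) i.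
  have h2 := (Hcs k).2.
  have h3 : / (INR k + 1) <= 1.
    have := pos_INR k => hk.
    have : / (INR k + 1) <= / 1 by apply: Rinv_le_contravar; lra.
    by rewrite Rinv_1.
  have h4 := abs_le_sq1 (cs k i - p i).
  have h5 := coord_le_sabs p i.
  have h6 := Rabs_triang (cs k i - p i) (p i).
  have -> : cs k i = cs k i - p i + p i by ring.
  rewrite /f in h2; lra.
have [phi [Hphi [cs0 Hc0]]] := BWn Bd.
have Cc0 : C cs0 := Ccl (fun k => (Hcs (phi k)).1) Hc0.
have fc0 : f cs0 <= - sg.
  have hconv : Un_cv (fun k => f (cs (phi k))) (f cs0).
    apply: conv_inner; apply: conv_sub => //; exact: conv_const.
  apply: (cv_le_lim (u := fun k => f (cs (phi k))) (v := fun k => - sg + / (INR (phi k) + 1))).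
  - move=> k; apply: Rlt_le; exact: (Hcs (phi k)).2.
  - exact: hconv.
  - have := CV_plus _ _ _ _ (cv_const (- sg)) (cv_subseq Hphi inv_INR_S_cv); by rewrite Rplus_0_r.
have Hmin : forall c, C c -> f cs0 <= f c by move=> c Cc; have := Hf c Cc; lra.
pose a := vsub cs0 p.
have Hvar : forall c, C c -> 0 <= inner a (vsub c cs0).
  move=> c Cc; apply: (quad_nonneg (inner_ge0 (vsub c cs0))) => th hth.
  have Cth := Cconv Cc0 Cc (conj (Rlt_le _ _ (proj1 hth)) (proj2 hth)).
  have E : vsub (vadd (vscale (1 - th) cs0) (vscale th c)) p = vadd a (vscale th (vsub c cs0)).
    apply: vec_eq => i; rewrite /a /vadd /vscale /vsub; ring.
  move: (Hmin _ Cth); rewrite /f E -/a inner_expand.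
  lra.
pose q0 := vsub p cs0.
have q0pos : 0 < inner q0 q0.
  have := inner_ge0 q0; case/Rle_lt_or_eq_dec => // h; exfalso.
  have := inner_eq0 (esym h); rewrite /q0 => e; apply: Cp.
  have -> : p = cs0 by apply: vec_eq => i; have := congr1 (fun g => g i) e; rewrite /vsub /vzero; lra.
  exact: Cc0.
have Hq0 : forall c, C c -> inner q0 c <= inner q0 p.
  move=> c Cc; have := Hvar c Cc.
  have -> : a = vscale (-1) q0 by apply: vec_eq => i; rewrite /a /q0 /vscale /vsub; ring.
  rewrite inner_scalel inner_subr.
  have : inner q0 cs0 = inner q0 p - inner q0 q0 by rewrite /q0 inner_subr; ring.
  lra.
pose sq := sqrt (inner q0 q0).
have sq0 : 0 < sq by apply: sqrt_lt_R0.
exists (vscale (/ sq) q0); split.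
  rewrite inner_scalel inner_scaler.
  have : sq * sq = inner q0 q0 by apply: sqrt_sqrt; lra.
  move=> h; field_simplify; [rewrite -h; field|]; lra.
move=> c Cc; rewrite !inner_scalel.
apply: Rmult_le_compat_l; [apply: Rlt_le; exact: Rinv_0_lt_compat| exact: Hq0].
Qed.

Lemma support (ps : nat -> vec d) p : (forall j, ~ C (ps j)) -> conv ps p ->
  exists q, inner q q = 1 /\ forall c, C c -> inner q c <= inner q p.
Proof.
move=> Hps Hp.
have H : forall j, exists q, inner q q = 1 /\ forall c, C c -> inner q c <= inner q (ps j).
  move=> j; exact: separation.
case: (choice_fun H) => qs Hqs.
have Bd : forall k i, Rabs (qs k i) <= 1.
  move=> k i; apply: abs_le1; rewrite -(Hqs k).1; exact: coord_sq.
have [phi [Hphi [q Hq]]] := BWn Bd.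
exists q; split.
  have h := conv_inner Hq Hq.
  have E : (fun k => inner (qs (phi k)) (qs (phi k))) = (fun _ => 1).
    by apply: functional_extensionality => k; rewrite (Hqs (phi k)).1.
  rewrite E in h; exact: (UL_sequence _ _ _ h (cv_const 1)).
move=> c Cc.
apply: (cv_le_lim (u := fun k => inner (qs (phi k)) c) (v := fun k => inner (qs (phi k)) (ps (phi k)))).
- move=> k; exact: (Hqs (phi k)).2.
- exact: conv_inner Hq (conv_const c).
- exact: conv_inner Hq (conv_sub_seq Hphi Hp).
Qed.
End Sep.


Section Enc.
Variable n : nat.
Definition enc (a b : vec n) : vec (n + n) :=
  fun i => match fintype.split i with inl j => a j | inr j => b j end.
Definition fst2 (q : vec (n + n)) : vec n := fun j => q (lshift n j).
Definition snd2 (q : vec (n + n)) : vec n := fun j => q (rshift n j).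

Lemma fst2_enc a b : fst2 (enc a b) = a.
Proof. apply: vec_eq => j; by rewrite /fst2 /enc (unsplitK (inl j)). Qed.
Lemma snd2_enc a b : snd2 (enc a b) = b.
Proof. apply: vec_eq => j; by rewrite /snd2 /enc (unsplitK (inr j)). Qed.
Lemma enc_surj q : q = enc (fst2 q) (snd2 q).
Proof.
apply: vec_eq => i; rewrite /enc /fst2 /snd2.
move: (splitK i); case: (fintype.split i) => j /= <-; by rewrite ?(unsplitK (inl j)) ?(unsplitK (inr j)).
Qed.
Lemma inner_enc q a b : inner q (enc a b) = inner (fst2 q) a + inner (snd2 q) b.
Proof.
rewrite /inner big_split_ord /=; congr Rplus; apply: eq_bigr => j _;
  by rewrite /enc /fst2 /snd2 ?(unsplitK (inl j)) ?(unsplitK (inr j)).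
Qed.
Lemma inner_qq q : inner q q = inner (fst2 q) (fst2 q) + inner (snd2 q) (snd2 q).
Proof. by rewrite {2}(enc_surj q) inner_enc. Qed.
Lemma enc_eq a b c d : enc a b = enc c d -> a = c /\ b = d.
Proof. move=> h; split; [rewrite -(fst2_enc a b) -(fst2_enc c d) | rewrite -(snd2_enc a b) -(snd2_enc c d)]; by rewrite h. Qed.
Lemma enc_comb a1 b1 a2 b2 s t :
  vadd (vscale s (enc a1 b1)) (vscale t (enc a2 b2)) =
  enc (vadd (vscale s a1) (vscale t a2)) (vadd (vscale s b1) (vscale t b2)).
Proof. apply: vec_eq => i; rewrite /vadd /vscale /enc; by case: (fintype.split i). Qed.
Lemma conv_fst2 qs q : conv qs q -> conv (fun k => fst2 (qs k)) (fst2 q).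
Proof. move=> H j; exact: H. Qed.
Lemma conv_snd2 qs q : conv qs q -> conv (fun k => snd2 (qs k)) (snd2 q).
Proof. move=> H j; exact: H. Qed.
Lemma conv_enc as_ bs a b : conv as_ a -> conv bs b -> conv (fun k => enc (as_ k) (bs k)) (enc a b).
Proof. move=> H1 H2 i; rewrite /enc; case: (fintype.split i) => j; [exact: H1| exact: H2]. Qed.
End Enc.


Section Main.
Variables (n m : nat) (K : vec n -> Prop) (N N3 : vec n -> R) (L : vec n -> Prop).
Hypotheses (HK : regular_cone K) (HN : is_norm N) (HN3 : is_norm N3) (HL : in_Gr L m).
Hypothesis Hn : (0 < n)%coq_nat.
Hypothesis Hx0 : exists x, L x /\ int_pt K x.

Lemma K_closed xs x : (forall k, K (xs k)) -> conv xs x -> K x.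
Proof. case: HK => H _; exact: H. Qed.
Lemma K_zero : K vzero.
Proof. by case: HK => _ []. Qed.
Lemma K_scale x t : K x -> 0 <= t -> K (vscale t x).
Proof. case: HK => _ [_ [H _]]; exact: H. Qed.
Lemma K_add x y : K x -> K y -> K (vadd x y).
Proof. case: HK => _ [_ [_ [H _]]]; exact: H. Qed.
Lemma K_pointed x : K x -> K (vopp x) -> x = vzero.
Proof. case: HK => _ [_ [_ [_ [H _]]]]; exact: H. Qed.

Definition B x := L x /\ N x <= 1.

Lemma B_zero : B vzero.
Proof. split; [exact: L_zero HL| rewrite (N_zero HN); lra]. Qed.

Lemma B_closed xs x : (forall k, B (xs k)) -> conv xs x -> B x.
Proof.
move=> H Hx; split; first by apply: (L_closed HL (fun k => (H k).1) Hx).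
apply: (cv_le_lim _ (N_cont HN Hx) (cv_const 1)) => k; exact: (H k).2.
Qed.

Lemma B_bound : exists cN, 0 < cN /\ forall x, B x -> forall i, Rabs (x i) <= cN.
Proof.
have [c [c0 Hc]] := N_lower HN; exists c; split => // x [_ Hx] i.
apply: Rle_trans (coord_le_sabs x i) _; apply: Rle_trans (Hc x) _.
have := N_ge0 HN x; nra.
Qed.

Lemma vsub0 (v : vec n) : vsub vzero (vscale 0 v) = vzero.
Proof. apply: vec_eq => i; rewrite /vsub /vscale /vzero; ring. Qed.

Lemma t_bound v : K v -> v <> vzero ->
  exists T, forall x t, B x -> K (vsub x (vscale t v)) -> t <= T.
Proof.
move=> Kv Hv0; apply: NNPP => Hno.
have H : forall j : nat, exists p : vec n * R, B p.1 /\ K (vsub p.1 (vscale p.2 v)) /\ INR j + 1 < p.2.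
  move=> j; apply: NNPP => Hj; apply: Hno; exists (INR j + 1) => x t Bx Kx.
  apply: Rnot_lt_le => ht; apply: Hj; by exists (x, t).
case: (choice_fun H) => p Hp.
have [cN [cN0 HcN]] := B_bound.
have tpos : forall j, 0 < (p j).2 by move=> j; have := (Hp j).2.2; have := pos_INR j; lra.
pose zs j := vscale (/ (p j).2) (vsub (p j).1 (vscale (p j).2 v)).
have Kz : forall j, K (zs j).
  move=> j; apply: K_scale; [exact: (Hp j).2.1| apply: Rlt_le; apply: Rinv_0_lt_compat; exact: tpos].
have Cz : conv zs (vsub vzero v).
  move=> i.
  have -> : (fun k => zs k i) = (fun k => / (p k).2 * (p k).1 i - v i).
    apply: functional_extensionality => k; rewrite /zs /vscale /vsub; field.
    by apply: Rgt_not_eq; exact: tpos.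
  rewrite /vsub /vzero; apply: CV_minus; last exact: cv_const.
  apply: (cv_squeeze0 (C := cN) _ inv_INR_S_cv) => k.
  have hp := (Hp k).2.2; have ht := tpos k; have hj := pos_INR k.
  rewrite Rabs_mult Rabs_right; last by apply: Rle_ge; apply: Rlt_le; apply: Rinv_0_lt_compat.
  have hb := HcN _ (Hp k).1 i.
  have h1 : / (p k).2 <= / (INR k + 1) by apply: Rinv_le_contravar; lra.
  have h2 : 0 <= / (p k).2 by apply: Rlt_le; apply: Rinv_0_lt_compat.
  have := Rabs_pos ((p k).1 i); nra.
have Kmv := K_closed Kz Cz.
apply: Hv0; apply: K_pointed => //.
have -> : vopp v = vsub vzero v by apply: vec_eq => i; rewrite /vopp /vsub /vzero; ring.
exact: Kmv.
Qed.

Definition Opt v t := (exists x, B x /\ K (vsub x (vscale t v))) /\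
  forall x t', B x -> K (vsub x (vscale t' v)) -> t' <= t.

Lemma Opt_ge0 v t : Opt v t -> 0 <= t.
Proof. case=> _ H; apply: (H vzero 0 B_zero); rewrite vsub0; exact: K_zero. Qed.

Lemma Opt_unique v t1 t2 : Opt v t1 -> Opt v t2 -> t1 = t2.
Proof.
case=> [[x1 [B1 K1]] H1] [[x2 [B2 K2]] H2].
have := H1 _ _ B2 K2; have := H2 _ _ B1 K1; lra.
Qed.

Lemma Opt_exists v : K v -> v <> vzero -> exists t, Opt v t.
Proof.
move=> Kv Hv0.
have [T HT] := t_bound Kv Hv0.
pose Phi t := exists x, B x /\ K (vsub x (vscale t v)).
have Phi0 : Phi 0 by exists vzero; split; [exact: B_zero| rewrite vsub0; exact: K_zero].
have Phib : bound Phi by exists T => t [x [Bx Kx]]; exact: HT Kx.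
case: (completeness Phi Phib (ex_intro _ 0 Phi0)) => ts [Hub Hlub].
have H : forall j : nat, exists p : vec n * R, B p.1 /\ K (vsub p.1 (vscale p.2 v)) /\
             ts - / (INR j + 1) < p.2.
  move=> j; apply: NNPP => Hj.
  have : ts <= ts - / (INR j + 1).
    apply: Hlub => t [x [Bx Kx]]; apply: Rnot_lt_le => ht; apply: Hj; by exists (x, t).
  have : 0 < / (INR j + 1) by apply: Rinv_0_lt_compat; have := pos_INR j; lra.
  lra.
case: (choice_fun H) => p Hp.
have [cN [cN0 HcN]] := B_bound.
have [phi [Hphi [x Hx]]] := BWn (fun k i => HcN _ (Hp k).1 i).
have Ht : Un_cv (fun k => (p (phi k)).2) ts.
  have Hw : Un_cv (fun k => / (INR (phi k) + 1)) 0 := cv_subseq Hphi inv_INR_S_cv.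
  have : Un_cv (fun k => (p (phi k)).2 - ts) 0.
    apply: (cv_squeeze0 (C := 1) _ Hw) => k.
    have h1 := (Hp (phi k)).2.2.
    have h2 : (p (phi k)).2 <= ts by apply: Hub; exists (p (phi k)).1; split; [exact: (Hp _).1| exact: (Hp _).2.1].
    rewrite Rabs_left1; lra.
  move=> h; have := CV_plus _ _ _ _ h (cv_const ts); rewrite Rplus_0_l.
  congr Un_cv; apply: functional_extensionality => k; ring.
exists ts; split; last by move=> y t By Ky; apply: Hub; by exists y.
exists x; split; first by apply: (B_closed (fun k => (Hp (phi k)).1) Hx).
apply: (K_closed (fun k => (Hp (phi k)).2.1)).
apply: conv_sub; [exact: Hx | apply: conv_scale; [exact: Ht| exact: conv_const]].
Qed.


Lemma int_scale x a : int_pt K x -> 0 < a -> exists r, 0 < r /\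
   forall y, (forall i, Rabs (y i - a * x i) < r) -> K y.
Proof.
move=> [r [r0 Hr]] a0; exists (a * r); split; first nra.
move=> y Hy.
have -> : y = vscale a (vscale (/ a) y) by apply: vec_eq => i; rewrite /vscale; field; lra.
apply: K_scale; last lra.
apply: Hr => i; rewrite /vscale.
have -> : / a * y i - x i = / a * (y i - a * x i) by field; lra.
rewrite Rabs_mult Rabs_right; last by apply: Rle_ge; apply: Rlt_le; apply: Rinv_0_lt_compat.
have := Hy i => h.
apply: (Rmult_lt_reg_l a) => //.
have -> : a * (/ a * Rabs (y i - a * x i)) = Rabs (y i - a * x i) by field; lra.
exact: h.
Qed.

Lemma int_nonzero x : int_pt K x -> x <> vzero.
Proof.
move=> [r [r0 Hr]] Hx; subst x.
pose i0 := Ordinal (introT ltP Hn).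
pose y : vec n := fun j => if j == i0 then r / 2 else 0.
have Ky : K y.
  apply: Hr => j; rewrite /y /vzero Rminus_0_r; case: (j == i0); last by rewrite Rabs_R0.
  rewrite Rabs_right; lra.
have Kmy : K (vopp y).
  apply: Hr => j; rewrite /y /vopp /vzero Rminus_0_r; case: (j == i0); last by rewrite Ropp_0 Rabs_R0.
  rewrite Rabs_Ropp Rabs_right; lra.
have := K_pointed Ky Kmy => h.
have := congr1 (fun f => f i0) h; rewrite /y eqxx /vzero /=; lra.
Qed.

Definition V1 v := K v /\ N3 v = 1.

Lemma x1_exists : exists x1 r1, B x1 /\ 0 < r1 /\
  forall y, (forall i, Rabs (y i - x1 i) < r1) -> K y.
Proof.
case: Hx0 => x0 [Lx0 Ix0].
have a0 : 0 < / (N x0 + 1) by apply: Rinv_0_lt_compat; have := N_ge0 HN x0; lra.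
case: (int_scale Ix0 a0) => r [r0 Hr].
exists (vscale (/ (N x0 + 1)) x0), r; split; last by split.
split; first exact: (L_scale HL _ Lx0).
rewrite (N_scale HN) Rabs_right; last lra.
have h := N_ge0 HN x0.
apply: (Rmult_le_reg_l (N x0 + 1)); first lra.
have -> : (N x0 + 1) * (/ (N x0 + 1) * N x0) = N x0 by field; lra.
lra.
Qed.

Lemma V1_bound : exists c3, 0 < c3 /\ forall v, V1 v -> sabs v <= c3.
Proof.
have [c [c0 Hc]] := N_lower HN3; exists c; split => // v [_ Hv].
have := Hc v; rewrite Hv; lra.
Qed.

Lemma V1_nonzero v : V1 v -> v <> vzero.
Proof. move=> [_ Hv] h; rewrite h (N_zero HN3) in Hv; lra. Qed.

Lemma V1_exists : exists v, V1 v.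
Proof.
case: Hx0 => x0 [_ Ix0].
have hx := int_nonzero Ix0.
have hN : 0 < N3 x0.
  have := N_ge0 HN3 x0 => h0; case: (Rle_lt_or_eq_dec _ _ h0) => // h; exfalso; apply: hx; apply: (N_eq0 HN3); by rewrite -h.
exists (vscale (/ N3 x0) x0); split.
  case: Ix0 => r [r0 Hr]; apply: K_scale; last by apply: Rlt_le; apply: Rinv_0_lt_compat.
  apply: Hr => i; rewrite Rminus_eq_0 Rabs_R0; lra.
rewrite (N_scale HN3) Rabs_right; last by apply: Rle_ge; apply: Rlt_le; apply: Rinv_0_lt_compat.
field; lra.
Qed.

Lemma Opt_pos v t : V1 v -> Opt v t -> 0 < t.
Proof.
move=> V1v [_ Ht].
have [x1 [r1 [Bx1 [r10 Hr1]]]] := x1_exists.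
have [c3 [c30 Hc3]] := V1_bound.
pose eps := r1 / (2 * (c3 + 1)).
have e0 : 0 < eps by rewrite /eps; apply: Rdiv_lt_0_compat; lra.
suff : eps <= t by lra.
apply: (Ht x1) => //; apply: Hr1 => i; rewrite /vsub /vscale.
have -> : x1 i - eps * v i - x1 i = - (eps * v i) by ring.
rewrite Rabs_Ropp Rabs_mult Rabs_right; last lra.
have h1 : Rabs (v i) <= c3 by apply: Rle_trans (coord_le_sabs v i) (Hc3 _ V1v).
have h2 : eps * Rabs (v i) <= eps * c3 by apply: Rmult_le_compat_l; lra.
have h3 : eps * c3 < r1.
  rewrite /eps; apply: (Rmult_lt_reg_l (2 * (c3 + 1))); first lra.
  have -> : 2 * (c3 + 1) * (r1 / (2 * (c3 + 1)) * c3) = r1 * c3 by field; lra.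
  nra.
lra.
Qed.


Lemma B_conv_comb x y th : B x -> B y -> 0 <= th <= 1 ->
  B (vadd (vscale (1 - th) x) (vscale th y)).
Proof.
move=> [Lx Nx] [Ly Ny] hth; split.
  apply: (L_add HL); exact: (L_scale HL).
apply: Rle_trans (N_tri HN _ _) _; rewrite !(N_scale HN) !Rabs_right; try lra.
nra.
Qed.

Lemma min_exists : exists vs s, V1 vs /\ Opt vs s /\ forall v t, V1 v -> Opt v t -> s <= t.
Proof.
pose Psi r := exists v t, V1 v /\ Opt v t /\ r = - t.
have [v0 V0] := V1_exists.
have [t0 Ot0] := Opt_exists V0.1 (V1_nonzero V0).
have Psi0 : Psi (- t0) by exists v0, t0.
have Psib : bound Psi by exists 0 => r [v [t [_ [Ot ->]]]]; have := Opt_ge0 Ot; lra.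
case: (completeness Psi Psib (ex_intro _ _ Psi0)) => sg [Hub Hlub].
pose s0 := - sg.
have Hs0 : forall v t, V1 v -> Opt v t -> s0 <= t.
  move=> v t V Ot; have := Hub (- t) (ex_intro _ v (ex_intro _ t (conj V (conj Ot erefl)))).
  rewrite /s0; lra.
have H : forall j : nat, exists p : vec n * R, V1 p.1 /\ Opt p.1 p.2 /\ p.2 < s0 + / (INR j + 1).
  move=> j; apply: NNPP => Hj.
  have : sg <= sg - / (INR j + 1).
    apply: Hlub => r [v [t [V [Ot ->]]]]; apply: Rnot_lt_le => ht; apply: Hj; exists (v, t).
    rewrite /s0 /=; split => //; split => //; lra.
  have : 0 < / (INR j + 1) by apply: Rinv_0_lt_compat; have := pos_INR j; lra.
  lra.
case: (choice_fun H) => p Hp.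
have [c3 [c30 Hc3]] := V1_bound.
have Bd : forall k i, Rabs ((p k).1 i) <= c3.
  move=> k i; apply: Rle_trans (coord_le_sabs _ i) (Hc3 _ (Hp k).1).
have [phi [Hphi [vs Hvs]]] := BWn Bd.
have V1s : V1 vs.
  split; first exact: (K_closed (fun k => (Hp (phi k)).1.1) Hvs).
  have h := N_cont HN3 Hvs.
  have E : (fun k => N3 ((p (phi k)).1)) = (fun _ => 1).
    by apply: functional_extensionality => k; rewrite (Hp (phi k)).1.2.
  rewrite E in h.
  exact: (UL_sequence _ _ _ h (cv_const 1)).
have [ts Ots] := Opt_exists V1s.1 (V1_nonzero V1s).
exists vs, ts; split => //; split => //.
suff hts : ts <= s0 by move=> v t V Ot; have := Hs0 v t V Ot; lra.
have [x1 [r1 [Bx1 [r10 Hr1]]]] := x1_exists.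
case: (Ots) => [[xs [Bxs Kxs]] _].
have ts0 := Opt_ge0 Ots.
have key : forall th eps, 0 < th < 1 -> 0 < eps -> (1 - th) * ts < s0 + eps.
  move=> th eps hth he.
  have Hsub := sabs_sub_cv Hvs.
  pose d := th * r1 / ((1 - th) * ts + 1).
  have d0 : 0 < d by rewrite /d; apply: Rdiv_lt_0_compat; nra.
  case: (Hsub d d0) => K1 HK1.
  case: (inv_INR_S_cv he) => K2 HK2.
  pose k := Nat.add K1 K2.
  have hk1 := HK1 k ltac:(rewrite /k; lia).
  have hk2 := HK2 (phi k) ltac:(have := strict_ge Hphi k; rewrite /k; lia).
  rewrite /R_dist Rminus_0_r in hk1 hk2.
  rewrite Rabs_right in hk1; last by apply: Rle_ge; exact: sabs_ge0.
  rewrite Rabs_right in hk2; last by rewrite Rminus_0_r; apply: Rle_ge; apply: Rlt_le; apply: Rinv_0_lt_compat; have := pos_INR (phi k); lra.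
  rewrite Rminus_0_r in hk2.
  have [_ Hopt] := (Hp (phi k)).2.1.
  have hlt := (Hp (phi k)).2.2.
  set vk := (p (phi k)).1 in hk1 Hopt hlt.
  set tk := (p (phi k)).2 in Hopt hlt.
  pose z := vadd (vscale (1 - th) xs) (vscale th x1).
  have Bz : B z by apply: B_conv_comb => //; lra.
  suff : (1 - th) * ts <= tk by lra.
  apply: (Hopt z) => //.
  have -> : vsub z (vscale ((1 - th) * ts) vk) =
     vadd (vscale (1 - th) (vsub xs (vscale ts vs)))
          (vadd (vscale th x1) (vscale ((1 - th) * ts) (vsub vs vk))).
    apply: vec_eq => i; rewrite /z /vadd /vsub /vscale; ring.
  apply: K_add; first by apply: K_scale => //; lra.
  have [r2 [r20 Hr2]] : exists r2, 0 < r2 /\ r2 = th * r1 by exists (th * r1); split => //; nra.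
  have Ix1 : int_pt K x1 by exists r1; split => //; move=> y Hy; apply: Hr1.
  case: (int_scale Ix1 (proj1 hth)) => r3 [r30 Hr3].
  have Hball : forall y, (forall i, Rabs (y i - th * x1 i) < th * r1) -> K y.
    move=> y Hy.
    have -> : y = vscale th (vscale (/ th) y) by apply: vec_eq => i; rewrite /vscale; field; lra.
    apply: K_scale; last lra.
    apply: Hr1 => i; rewrite /vscale.
    have -> : / th * y i - x1 i = / th * (y i - th * x1 i) by field; lra.
    rewrite Rabs_mult Rabs_right; last by apply: Rle_ge; apply: Rlt_le; apply: Rinv_0_lt_compat; lra.
    apply: (Rmult_lt_reg_l th); first lra.
    have -> : th * (/ th * Rabs (y i - th * x1 i)) = Rabs (y i - th * x1 i) by field; lra.
    exact: Hy i.
  apply: Hball => i; rewrite /vadd /vscale /vsub.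
  have -> : th * x1 i + (1 - th) * ts * (vs i - vk i) - th * x1 i = (1 - th) * ts * (vs i - vk i) by ring.
  have hc : Rabs (vs i - vk i) <= sabs (vsub vk vs).
    have := coord_le_sabs (vsub vk vs) i; rewrite /vsub => h.
    by rewrite -Rabs_Ropp; have -> : - (vs i - vk i) = vk i - vs i by ring.
  rewrite Rabs_mult Rabs_right; last by apply: Rle_ge; nra.
  have h1 : (1 - th) * ts * Rabs (vs i - vk i) <= (1 - th) * ts * sabs (vsub vk vs).
    apply: Rmult_le_compat_l => //; nra.
  have h2 : ((1 - th) * ts) * sabs (vsub vk vs) <= ((1 - th) * ts + 1) * sabs (vsub vk vs).
    have := sabs_ge0 (vsub vk vs); nra.
  have h3 : ((1 - th) * ts + 1) * sabs (vsub vk vs) < ((1 - th) * ts + 1) * d.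
    apply: Rmult_lt_compat_l => //; nra.
  have h4 : ((1 - th) * ts + 1) * d = th * r1 by rewrite /d; field; nra.
  lra.
apply: Rnot_lt_le => hlt.
have tpos : 0 < ts := Opt_pos V1s Ots.
have hs0 : 0 <= s0.
  have : sg <= 0 by apply: Hlub => r [v [t [_ [Ot ->]]]]; have := Opt_ge0 Ot; lra.
  rewrite /s0; lra.
have := key ((ts - s0) / (2 * ts)) ((ts - s0) / 4).
move=> h.
have hth : 0 < (ts - s0) / (2 * ts) < 1.
  split; first by apply: Rdiv_lt_0_compat; lra.
  apply: (Rmult_lt_reg_l (2 * ts)); first lra.
  have -> : 2 * ts * ((ts - s0) / (2 * ts)) = ts - s0 by field; lra.
  lra.
have := h hth ltac:(lra).
have -> : (1 - (ts - s0) / (2 * ts)) * ts = (ts + s0) / 2 by field; lra.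
lra.
Qed.


Lemma sphere v t : V1 v -> Opt v t -> exists x, L x /\ N x = 1 /\ K (vsub x (vscale t v)).
Proof.
move=> V Ot.
have tpos := Opt_pos V Ot.
case: (Ot) => [[x [[Lx Nx] Kx]] Hup].
have Npos : 0 < N x.
  have := N_ge0 HN x; case/Rle_lt_or_eq_dec => // h; exfalso.
  have x0 : x = vzero by apply: (N_eq0 HN); rewrite -h.
  apply: (V1_nonzero V); apply: K_pointed; first exact: V.1.
  have -> : vopp v = vscale (/ t) (vsub x (vscale t v)).
    apply: vec_eq => i; rewrite x0 /vopp /vscale /vsub /vzero; field; lra.
  apply: K_scale => //; apply: Rlt_le; exact: Rinv_0_lt_compat.
exists x; split => //; split => //.
apply: Rle_antisym => //; apply: Rnot_lt_le => hlt.
have hB : B (vscale (/ N x) x).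
  split; first exact: (L_scale HL _ Lx).
  rewrite (N_scale HN) Rabs_right; last by apply: Rle_ge; apply: Rlt_le; apply: Rinv_0_lt_compat.
  right; field; lra.
have hK : K (vsub (vscale (/ N x) x) (vscale (t / N x) v)).
  have -> : vsub (vscale (/ N x) x) (vscale (t / N x) v) = vscale (/ N x) (vsub x (vscale t v)).
    apply: vec_eq => i; rewrite /vscale /vsub; field; lra.
  apply: K_scale => //; apply: Rlt_le; exact: Rinv_0_lt_compat.
have := Hup _ _ hB hK.
have : t < t / N x.
  apply: (Rmult_lt_reg_l (N x)) => //.
  have -> : N x * (t / N x) = t by field; lra.
  nra.
lra.
Qed.

Lemma lin_zero a beta : (forall c, c * a <= beta) -> a = 0.
Proof.
move=> H; apply: NNPP => ha.
have := H ((Rabs beta + 1) / a).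
have -> : (Rabs beta + 1) / a * a = Rabs beta + 1 by field.
have := Rle_abs beta; lra.
Qed.

Lemma lin_nonpos a beta : (forall c, 0 <= c -> c * a <= beta) -> a <= 0.
Proof.
move=> H; apply: Rnot_lt_le => ha.
have := H ((Rabs beta + 1) / a) ltac:(apply: Rlt_le; apply: Rdiv_lt_0_compat => //; have := Rabs_pos beta; lra).
have -> : (Rabs beta + 1) / a * a = Rabs beta + 1 by field; lra.
have := Rle_abs beta; lra.
Qed.

Lemma Nball_bound : exists cN, 0 < cN /\ forall x, N x <= 1 -> forall i, Rabs (x i) <= cN.
Proof.
have [c [c0 Hc]] := N_lower HN; exists c; split => // x Hx i.
apply: Rle_trans (coord_le_sabs x i) _; apply: Rle_trans (Hc x) _.
have := N_ge0 HN x; nra.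
Qed.

Lemma dual_exists vs s : V1 vs -> Opt vs s -> exists u y,
  dual_cone K u /\ orth L y /\ inner u vs = 1 /\ forall x, N x = 1 -> inner (vsub u y) x <= s.
Proof.
move=> Vs Os.
pose G (g : vec (n + n)) := exists x k l, N x <= 1 /\ K k /\ L l /\ g = enc (vsub x k) (vsub x l).
have Gconv : convexV G.
  move=> g1 g2 th [x1 [k1 [l1 [N1 [K1 [L1 ->]]]]]] [x2 [k2 [l2 [N2 [K2 [L2 ->]]]]]] hth.
  exists (vadd (vscale (1 - th) x1) (vscale th x2)), (vadd (vscale (1 - th) k1) (vscale th k2)),
    (vadd (vscale (1 - th) l1) (vscale th l2)).
  split.
    apply: Rle_trans (N_tri HN _ _) _; rewrite !(N_scale HN) !Rabs_right; try lra; nra.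
  split; first by apply: K_add; apply: K_scale => //; lra.
  split; first by apply: (L_add HL); apply: (L_scale HL).
  rewrite enc_comb; congr enc; apply: vec_eq => i; rewrite /vadd /vscale /vsub; ring.
have Gcl : closedV G.
  move=> gs g Hg Hgc.
  case: (choice_fun Hg) => x Hx.
  have {}Hx : forall k, exists kl : vec n * vec n, N (x k) <= 1 /\ K kl.1 /\ L kl.2 /\
      gs k = enc (vsub (x k) kl.1) (vsub (x k) kl.2).
    move=> k; case: (Hx k) => k0 [l0 H]; by exists (k0, l0).
  case: (choice_fun Hx) => kl Hkl.
  have [cN [cN0 HcN]] := Nball_bound.
  have [phi [Hphi [xl Hxl]]] := BWn (fun k i => HcN _ (Hkl k).1 i).
  have Nxl : N xl <= 1.
    apply: (cv_le_lim _ (N_cont HN Hxl) (cv_const 1)) => k; exact: (Hkl (phi k)).1.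
  have Ek : forall k, (kl k).1 = vsub (x k) (fst2 (gs k)).
    move=> k; rewrite (Hkl k).2.2.2 fst2_enc; apply: vec_eq => i; rewrite /vsub; ring.
  have El : forall k, (kl k).2 = vsub (x k) (snd2 (gs k)).
    move=> k; rewrite (Hkl k).2.2.2 snd2_enc; apply: vec_eq => i; rewrite /vsub; ring.
  have Hg1 := conv_fst2 (conv_sub_seq Hphi Hgc).
  have Hg2 := conv_snd2 (conv_sub_seq Hphi Hgc).
  exists xl, (vsub xl (fst2 g)), (vsub xl (snd2 g)); split => //; split.
    apply: (K_closed (xs := fun k => vsub (x (phi k)) (fst2 (gs (phi k))))).
      move=> k; rewrite -Ek; exact: (Hkl (phi k)).2.1.
    exact: conv_sub.
  split.
    apply: (L_closed HL (xs := fun k => vsub (x (phi k)) (snd2 (gs (phi k))))).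
      move=> k; rewrite -El; exact: (Hkl (phi k)).2.2.1.
    exact: conv_sub.
  rewrite {1}(enc_surj g); congr enc; apply: vec_eq => i; rewrite /vsub; ring.
have Gne : exists g, G g.
  exists (enc (vsub vzero vzero) (vsub vzero vzero)), vzero, vzero, vzero.
  split; first by rewrite (N_zero HN); lra.
  split; first exact: K_zero.
  split => //; exact: L_zero HL.
pose ps j := enc (vscale (s + / (INR j + 1)) vs) vzero.
have Hps : forall j, ~ G (ps j).
  move=> j [x [k [l [Nx [Kk [Ll E]]]]]].
  case: (enc_eq E) => E1 E2.
  have xl : x = l by apply: vec_eq => i; have := congr1 (fun f => f i) E2; rewrite /vzero /vsub; lra.
  have Kx : K (vsub x (vscale (s + / (INR j + 1)) vs)).
    have -> : vsub x (vscale (s + / (INR j + 1)) vs) = k.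
      apply: vec_eq => i; have := congr1 (fun f => f i) E1; rewrite /vsub /vscale; lra.
    exact: Kk.
  have := Os.2 x _ (conj (eq_ind_r L Ll xl) Nx) Kx.
  have : 0 < / (INR j + 1) by apply: Rinv_0_lt_compat; have := pos_INR j; lra.
  lra.
have Hpc : conv ps (enc (vscale s vs) vzero).
  apply: conv_enc; last exact: conv_const.
  apply: conv_scale; last exact: conv_const.
  have := CV_plus _ _ _ _ (cv_const s) inv_INR_S_cv; by rewrite Rplus_0_r.
have [q [Hq1 Hq]] := support Gconv Gcl Gne Hps Hpc.
pose w := fst2 q. pose y' := snd2 q.
pose beta := s * inner w vs.
have Hsep : forall x k l, N x <= 1 -> K k -> L l -> inner w (vsub x k) + inner y' (vsub x l) <= beta.
  move=> x k l Nx Kk Ll.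
  have := Hq _ (ex_intro _ x (ex_intro _ k (ex_intro _ l (conj Nx (conj Kk (conj Ll erefl)))))).
  rewrite !inner_enc inner_zeror inner_scaler; rewrite /beta /w /y'; lra.
have N0 : N vzero <= 1 by rewrite (N_zero HN); lra.
have Hy : orth L y'.
  move=> l Ll; rewrite inner_sym; apply: (lin_zero (beta := beta)) => c.
  have := Hsep vzero vzero (vscale (- c) l) N0 K_zero (L_scale HL _ Ll).
  rewrite inner_subr inner_zeror inner_subr inner_zeror inner_scaler; lra.
have Hw : dual_cone K w.
  move=> k Kk; suff : - inner w k <= 0 by lra.
  apply: (lin_nonpos (beta := beta)) => c hc.
  have := Hsep vzero (vscale c k) vzero N0 (K_scale Kk hc) (L_zero HL).
  rewrite inner_subr inner_zeror inner_subr !inner_zeror inner_scaler; lra.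
have Hz : forall x, N x <= 1 -> inner (vadd w y') x <= beta.
  move=> x Nx; have := Hsep x vzero vzero Nx K_zero (L_zero HL).
  have -> : vsub x vzero = x by apply: vec_eq => i; rewrite /vsub /vzero; ring.
  by rewrite inner_addl.
have beta0 : 0 <= beta.
  have := Hsep vzero vzero vzero N0 K_zero (L_zero HL).
  have -> : vsub (vzero : vec n) vzero = vzero by apply: vec_eq => i; rewrite /vsub /vzero; ring.
  rewrite !inner_zeror; lra.
have betapos : 0 < beta.
  case: (Rle_lt_or_eq_dec _ _ beta0) => // hb; exfalso.
  pose z := vadd w y'.
  have z0 : z = vzero.
    apply: inner_eq0; apply: Rle_antisym; last exact: inner_ge0.
    have hN := N_ge0 HN z.
    have := Hz (vscale (/ (N z + 1)) z).
    rewrite inner_scaler -/z -hb.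
    have hinv : 0 < / (N z + 1) by apply: Rinv_0_lt_compat; lra.
    move=> h; have : / (N z + 1) * inner z z <= 0.
      apply: h; rewrite (N_scale HN) Rabs_right; last lra.
      apply: (Rmult_le_reg_l (N z + 1)); first lra.
      have -> : (N z + 1) * (/ (N z + 1) * N z) = N z by field; lra.
      lra.
    have := inner_ge0 z; nra.
  have wy : w = vopp y' by apply: vec_eq => i; have := congr1 (fun f => f i) z0; rewrite /z /vadd /vopp /vzero; lra.
  case: Hx0 => x0 [Lx0 [r [r0 Hr]]].
  have wx0 : inner w x0 = 0 by rewrite wy inner_oppl inner_sym (Hy _ Lx0); ring.
  pose eps := r / (2 * (sabs w + 1)).
  have e0 : 0 < eps by rewrite /eps; apply: Rdiv_lt_0_compat; have := sabs_ge0 w; lra.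
  have Kxe : K (vsub x0 (vscale eps w)).
    apply: Hr => i; rewrite /vsub /vscale.
    have -> : x0 i - eps * w i - x0 i = - (eps * w i) by ring.
    rewrite Rabs_Ropp Rabs_mult Rabs_right; last lra.
    have h1 := coord_le_sabs w i; have h2 := sabs_ge0 w.
    have : eps * Rabs (w i) <= eps * sabs w by apply: Rmult_le_compat_l; lra.
    have : eps * sabs w < r.
      rewrite /eps; apply: (Rmult_lt_reg_l (2 * (sabs w + 1))); first lra.
      have -> : 2 * (sabs w + 1) * (r / (2 * (sabs w + 1)) * sabs w) = r * sabs w by field; lra.
      nra.
    lra.
  have := Hw _ Kxe; rewrite inner_subr inner_scaler wx0 => h.
  have ww : inner w w = 0 by have := inner_ge0 w; nra.
  have w0 := inner_eq0 ww.
  have y0 : y' = vzero by apply: vec_eq => i; have := congr1 (fun f => f i) wy; rewrite w0 /vopp /vzero; lra.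
  move: Hq1; rewrite inner_qq -/w -/y' w0 y0 inner_zerol; lra.
have s0 := Opt_ge0 Os.
have gpos : 0 < inner w vs by move: betapos; rewrite /beta => h; nra.
pose ga := inner w vs.
exists (vscale (/ ga) w), (vscale (- / ga) y'); split.
  move=> k Kk; rewrite inner_scalel; apply: Rmult_le_pos; last exact: Hw.
  apply: Rlt_le; apply: Rinv_0_lt_compat; exact: gpos.
split.
  move=> x Lx; rewrite inner_scaler (Hy _ Lx); ring.
split; first by rewrite inner_scalel -/ga; apply: Rinv_l; rewrite /ga; lra.
move=> x Nx.
have -> : vsub (vscale (/ ga) w) (vscale (- / ga) y') = vscale (/ ga) (vadd w y').
  apply: vec_eq => i; rewrite /vsub /vscale /vadd; ring.
rewrite inner_scalel.
have := Hz x (Req_le _ _ Nx).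
have hg : 0 < / ga by apply: Rinv_0_lt_compat.
move=> h; apply: Rle_trans (Rmult_le_compat_l _ _ _ (Rlt_le _ _ hg) h) _.
rewrite /beta -/ga; right; rewrite /ga; field; lra.
Qed.

End Main.

End Aux.
Import Aux.


Lemma lam_ge n (K : vec n -> Prop) v x t : K (vsub x (vscale t v)) -> ER_le (ERfin t) (lam K v x).
Proof. move=> H; apply: supER_ge; by exists t. Qed.

Lemma lam_le n (K : vec n -> Prop) v x M :
  (forall t, K (vsub x (vscale t v)) -> t <= M) -> ER_le (lam K v x) (ERfin M).
Proof. move=> H; apply: supER_le => e [t [-> Ht]] /=; exact: H. Qed.

Theorem mainTheorem8 (n m : nat) (K : vec n -> Prop) (N N3 : vec n -> R)
    (L : vec n -> Prop) :
  regular_cone K -> is_norm N -> is_norm N3 ->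
  (1 <= m)%nat -> (m < n)%nat -> in_Gr L m ->
  (exists x, L x /\ int_pt K x) ->
  exists s : R,
    sigmaL K N N3 L = ERfin s /\
    (forall v, K v /\ N3 v = 1 ->
       exists M, IsMaxOf (fun x => L x /\ N x <= 1) (lam K v) M) /\
    IsMinOf (fun v => K v /\ N3 v = 1)
            (fun v => supOver (fun x => L x /\ N x <= 1) (lam K v)) (ERfin s) /\
    (forall v, K v /\ N3 v = 1 ->
       exists M, IsMaxOf (fun x => L x /\ N x = 1) (lam K v) M) /\
    IsMinOf (fun v => K v /\ N3 v = 1)
            (fun v => supOver (fun x => L x /\ N x = 1) (lam K v)) (ERfin s) /\
    IsMinOf (fun p : vec n * vec n * vec n =>
               let '(v, y, u) := p in
               K v /\ orth L y /\ dual_cone K u /\ N3 v = 1 /\ inner u v = 1)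
            (fun p : vec n * vec n * vec n =>
               let '(v, y, u) := p in dualnorm N (vsub u y))
            (ERfin s).
Proof.
move=> HK HN HN3 _ Hmn HL Hx0.
have Hn : (0 < n)%coq_nat by move/ltP: Hmn; lia.
have [vs [s [Vs [Os Hmin]]]] := min_exists HK HN HN3 HL Hn Hx0.
have MaxB : forall v t, V1 K N3 v -> Opt K N L v t ->
    IsMaxOf (fun x => L x /\ N x <= 1) (lam K v) (ERfin t).
  move=> v t V [[x [Bx Kx]] Hup]; split.
    exists x; split => //; apply: ER_le_antisym; last exact: lam_ge.
    apply: lam_le => t' Kt'; exact: Hup _ _ Bx Kt'.
  move=> y By; apply: lam_le => t' Kt'; exact: Hup _ _ By Kt'.
have MaxS : forall v t, V1 K N3 v -> Opt K N L v t ->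
    IsMaxOf (fun x => L x /\ N x = 1) (lam K v) (ERfin t).
  move=> v t V Ot; case: (sphere HK HN HN3 HL Hx0 V Ot) => x [Lx [Nx Kx]].
  case: Ot => _ Hup; split.
    exists x; split => //; apply: ER_le_antisym; last exact: lam_ge.
    apply: lam_le => t' Kt'; apply: (Hup x) => //; split => //; lra.
  move=> y [Ly Ny]; apply: lam_le => t' Kt'; apply: (Hup y) => //; split => //; lra.
have OptE : forall v, V1 K N3 v -> exists t, Opt K N L v t.
  move=> v V; exact: (Opt_exists HK HN HL V.1 (V1_nonzero HN3 V)).
have MinB : IsMinOf (fun v => K v /\ N3 v = 1)
            (fun v => supOver (fun x => L x /\ N x <= 1) (lam K v)) (ERfin s).
  split.
    exists vs; split => //; exact: IsMax_sup (MaxB _ _ Vs Os).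
  move=> v V; case: (OptE v V) => t Ot; rewrite (IsMax_sup (MaxB _ _ V Ot)) /=.
  exact: Hmin _ _ V Ot.
have MinS : IsMinOf (fun v => K v /\ N3 v = 1)
            (fun v => supOver (fun x => L x /\ N x = 1) (lam K v)) (ERfin s).
  split.
    exists vs; split => //; exact: IsMax_sup (MaxS _ _ Vs Os).
  move=> v V; case: (OptE v V) => t Ot; rewrite (IsMax_sup (MaxS _ _ V Ot)) /=.
  exact: Hmin _ _ V Ot.
have Weak : forall v y u, K v -> orth L y -> dual_cone K u -> N3 v = 1 -> inner u v = 1 ->
    ER_le (ERfin s) (dualnorm N (vsub u y)).
  move=> v y u Kv Hy Hu Nv Huv.
  have V : V1 K N3 v by split.
  case: (OptE v V) => t Ot.
  case: (sphere HK HN HN3 HL Hx0 V Ot) => x [Lx [Nx Kx]].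
  apply: (ER_le_trans (b := ERfin (inner (vsub u y) x))); last first.
    exact: (@supOver_ge _ (fun x => N x = 1) (fun x => ERfin (inner (vsub u y) x)) x Nx).
  simpl.
  have h1 := Hmin _ _ V Ot.
  have h2 := Hu _ Kx; rewrite inner_subr inner_scaler Huv in h2.
  rewrite inner_subl (inner_sym y x) (Hy _ Lx); lra.
exists s; split; first exact: IsMin_inf MinB.
split; first by move=> v V; case: (OptE v V) => t Ot; exists (ERfin t); exact: MaxB.
split => //.
split; first by move=> v V; case: (OptE v V) => t Ot; exists (ERfin t); exact: MaxS.
split => //.
case: (dual_exists HK HN HL Hx0 Vs Os) => u [y [Hu [Hy [Huv Hle]]]].
split.
  exists (vs, y, u); split; first by case: Vs => Kv Nv; split => //; split => //; split.
  apply: ER_le_antisym; last by apply: Weak; [exact: Vs.1|exact: Hy|exact: Hu|exact: Vs.2|exact: Huv].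
  apply: supOver_le => x Nx /=; exact: Hle.
case=> [[v y'] u'] [Kv [Hy' [Hu' [Nv Huv']]]]; exact: (Weak v y' u' Kv Hy' Hu' Nv Huv').
Qed.
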